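(* Let $\Phi$ be a Leonard system in $\mathcal A$ with parameter array $(\theta_i,\theta^*_i,i=0..d;\varphi_j,\phi_j,j=1..d)$ and let $\nu=\mathrm{tr}(E_0E^*_0)^{-1}$. Then $$\nu=\frac{\eta_d(\theta_0)\,\eta^*_d(\theta^*_0)}{\phi_1\phi_2\cdots\phi_d}.$$
   Context: Let $\mathbb K$ be a field, $d\ge 0$ an integer, and $\mathcal A$ a $\mathbb K$-algebra isomorphic to $\mathrm{Mat}_{d+1}(\mathbb K)$, with identity $I$ and trace $\mathrm{tr}$. An element $A\in\mathcal A$ is multiplicity-free if it has $d+1$ mutually distinct eigenvalues in $\mathbb K$; if $\theta_0,\dots,\theta_d$ is an ordering of them, the primitive idempotent of $A$ associated with $\theta_i$ is $E_i=\prod_{j\ne i}(A-\theta_jI)/(\theta_i-\theta_j)$. A Leonard system in $\mathcal A$ is a sequence $\Phi=(A;A^*;\{E_i\}_{i=0}^d;\{E^*_i\}_{i=0}^d)$ such that: (i) $A,A^*$ are multiplicity-free; (ii) $E_0,\dots,E_d$ is an ordering of the primitive idempotents of $A$; (iii) $E^*_0,\dots,E^*_d$ is an ordering of those of $A^*$; (iv) $E_iA^*E_j=0$ if $|i-j|>1$ and $\ne0$ if $|i-j|=1$ $(0\le i,j\le d)$; (v) $E^*_iAE^*_j=0$ if $|i-j|>1$ and $\neq0$ if $|i-j|=1$ $(0\le i,j\le d)$. $\theta_i$ (resp. $\theta^*_i$) is the eigenvalue of $A$ (resp. $A^*$) for $E_i$ (resp. $E^*_i$). One has $\mathrm{tr}(E_0E^*_0)\neq0$.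 It is known that there exist unique nonzero scalars $\varphi_1,\dots,\varphi_d\in\mathbb K$ (first split sequence) such that for some $\mathbb K$-algebra isomorphism $\natural:\mathcal A\to\mathrm{Mat}_{d+1}(\mathbb K)$, $A^\natural$ is lower bidiagonal with diagonal $\theta_0,\dots,\theta_d$ and subdiagonal entries all $1$, and $A^{*\natural}$ is upper bidiagonal with diagonal $\theta^*_0,\dots,\theta^*_d$ and $(A^{*\natural})_{i-1,i}=\varphi_i$. The second split sequence $\phi_1,\dots,\phi_d$ is the first split sequence of $(A;A^*;\{E_{d-i}\}_{i=0}^d;\{E^*_i\}_{i=0}^d)$. Polynomials: $\eta_i=\prod_{h=0}^{i-1}(\lambda-\theta_{d-h})$, $\eta^*_i=\prod_{h=0}^{i-1}(\lambda-\theta^*_{d-h})$. *)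

(* Defs.v *)
From mathcomp Require Import all_boot all_order all_algebra.
Set Implicit Arguments. Unset Strict Implicit. Unset Printing Implicit Defensive.
Import Order.TTheory GRing.Theory Num.Theory.
Local Open Scope ring_scope.

(* A K-algebra [A] is identified with Mat_{d+1}(K) through a fixed K-algebra
   isomorphism [f : {lrmorphism A -> 'M[K]_d.+1}] (bijective).  Eigenvalues and
   the trace of elements of [A] are read through [f] (they do not depend on the
   choice of isomorphism). Sequences indexed by 0..d (or 1..d) are [nat -> _];
   only the relevant indices matter. *)

Section LS.
Variables (K : fieldType) (d : nat) (A : algType K).

Definition trA (f : A -> 'M[K]_d.+1) (X : A) : K := \tr (f X).

Definition prim_idem (a : A) (theta : nat -> K) (i : nat) : A :=
  \prod_(j < d.+1 | (j : nat) != i)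
     ((theta i - theta j)^-1 *: (a - (theta j)%:A)).

Definition mf_ordering (f : A -> 'M[K]_d.+1) (a : A) (theta : nat -> K) : Prop :=
  (forall i, (i <= d)%N -> eigenvalue (f a) (theta i)) /\
  (forall i j, (i <= d)%N -> (j <= d)%N -> theta i = theta j -> i = j).

(* Leonard system (A; A*; {E_i}; {E*_i}) where E_i = prim_idem a theta i and
   E*_i = prim_idem as thetas i *)
Definition leonard_system (f : A -> 'M[K]_d.+1) (a as_ : A)
    (theta thetas : nat -> K) : Prop :=
  [/\ mf_ordering f a theta, mf_ordering f as_ thetas,
      (forall i j, (i <= d)%N -> (j <= d)%N ->
         ((i.+1 < j)%N || (j.+1 < i)%N) ->
           prim_idem a theta i * as_ * prim_idem a theta j = 0),
        (forall i j, (i <= d)%N -> (j <= d)%N ->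
         ((i.+1 == j) || (j.+1 == i)) ->
           prim_idem a theta i * as_ * prim_idem a theta j != 0) &
    ((forall i j, (i <= d)%N -> (j <= d)%N ->
         ((i.+1 < j)%N || (j.+1 < i)%N) ->
           prim_idem as_ thetas i * a * prim_idem as_ thetas j = 0) /\
        (forall i j, (i <= d)%N -> (j <= d)%N ->
         ((i.+1 == j) || (j.+1 == i)) ->
           prim_idem as_ thetas i * a * prim_idem as_ thetas j != 0))].

Definition lower_bidiag (theta : nat -> K) : 'M[K]_d.+1 :=
  \matrix_(i, j) (if (i : nat) == j then theta i
                  else if (i : nat) == j.+1 then 1 else 0).

Definition upper_bidiag (thetas phi : nat -> K) : 'M[K]_d.+1 :=
  \matrix_(i, j) (if (i : nat) == j then thetas i
                  else if (j : nat) == i.+1 then phi j else 0).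

Definition split_sequence (a as_ : A) (theta thetas phi : nat -> K) : Prop :=
  (forall j, (1 <= j <= d)%N -> phi j != 0) /\
  exists g : {lrmorphism A -> 'M[K]_d.+1},
    bijective g /\ g a = lower_bidiag theta /\ g as_ = upper_bidiag thetas phi.

Definition eta (theta : nat -> K) (i : nat) (lam : K) : K :=
  \prod_(h < i) (lam - theta (d - h)%N).

End LS.

(* Main.v *)
Require Import Defs.
From mathcomp Require Import all_boot all_order all_algebra zify ring.
Set Implicit Arguments. Unset Strict Implicit. Unset Printing Implicit Defensive.
Import Order.TTheory GRing.Theory Num.Theory.
Local Open Scope ring_scope.
Ltac ordlia := repeat (match goal with x : ordinal ?n |- _ =>
  lazymatch goal with _ : is_true (nat_of_ord x < n)%N |- _ => fail | _ => have := ltn_ord x; intro end end); lia.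
Section M.
Variables (K : fieldType) (d : nat).
Implicit Types (th ph : nat -> K) (c : K).
Lemma Lent th c (i j : 'I_d.+1) : (lower_bidiag d th - c%:M) i j =
  if (i : nat) == j then th i - c else if (i : nat) == j.+1 then 1 else 0.
Proof.
rewrite !mxE; case: eqP => [/val_inj -> | ne]; first by rewrite eqxx.
have -> : (i == j) = false by apply/eqP => E; apply ne; rewrite E.
by rewrite subr0.
Qed.

Lemma Uent th ph c (i j : 'I_d.+1) : (upper_bidiag d th ph - c%:M) i j =
  if (i : nat) == j then th i - c else if (j : nat) == i.+1 then ph j else 0.
Proof.
rewrite !mxE; case: eqP => [/val_inj -> | ne]; first by rewrite eqxx.
have -> : (i == j) = false by apply/eqP => E; apply ne; rewrite E.
by rewrite subr0.
Qed.

Lemma mulL th (c : K) (M : 'M[K]_d.+1) (i k : 'I_d.+1) :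
  ((lower_bidiag d th - c%:M) *m M) i k =
  (th i - c) * M i k + (if (0 < i)%N then M (inord i.-1) k else 0).
Proof.
rewrite mxE (bigD1 i) //= Lent eqxx; congr (_ + _).
case: ifP => Hi.
  have Hl : (i.-1 < d.+1)%N by apply: leq_trans (ltn_ord i); rewrite prednK.
  have Hne : inord i.-1 != i.
    by apply/eqP => /(congr1 val); rewrite /= inordK //; lia.
  rewrite (bigD1 (inord i.-1)) //= big1 ?addr0; last first.
    move=> j /andP[Hj1 Hj2]; rewrite Lent.
    have -> : ((i : nat) == j) = false by apply/negbTE; rewrite eq_sym.
    case: eqP; last by rewrite mul0r.
    move=> E; case/negP: Hj2; apply/eqP/val_inj; rewrite /= inordK // E //.
  rewrite Lent inordK // prednK // eqxx.
  have -> : ((i : nat) == i.-1) = false by apply/eqP; lia.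
  by rewrite mul1r.
rewrite big1 // => j Hj; rewrite Lent.
have -> : ((i : nat) == j) = false by apply/negbTE; rewrite eq_sym.
by move/negbT: Hi; rewrite -eqn0Ngt => /eqP ->; rewrite mul0r.
Qed.

Lemma mulU th ph (c : K) (M : 'M[K]_d.+1) (i k : 'I_d.+1) :
  ((upper_bidiag d th ph - c%:M) *m M) i k =
  (th i - c) * M i k + (if (i < d)%N then ph i.+1 * M (inord i.+1) k else 0).
Proof.
rewrite mxE (bigD1 i) //= Uent eqxx; congr (_ + _).
case: ifP => Hi.
  have Hne : inord i.+1 != i.
    by apply/eqP => /(congr1 val); rewrite /= inordK //; lia.
  rewrite (bigD1 (inord i.+1)) //= big1 ?addr0; last first.
    move=> j /andP[Hj1 Hj2]; rewrite Uent.
    have -> : ((i : nat) == j) = false by apply/negbTE; rewrite eq_sym.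
    case: eqP; last by rewrite mul0r.
    move=> E; case/negP: Hj2; apply/eqP/val_inj; rewrite /= inordK // E //.
  rewrite Uent inordK // eqxx.
  by have -> : ((i : nat) == i.+1) = false by apply/eqP; lia.
rewrite big1 // => j Hj; rewrite Uent.
have -> : ((i : nat) == j) = false by apply/negbTE; rewrite eq_sym.
case: eqP; last by rewrite mul0r.
move=> E; have := ltn_ord j; rewrite E ltnS => Hid; by rewrite Hid in Hi.
Qed.

Fixpoint PL th s : 'M[K]_d.+1 :=
  if s is s'.+1 then (lower_bidiag d th - (th s')%:M) *m PL th s' else 1%:M.
Fixpoint PU th ph s : 'M[K]_d.+1 :=
  if s is s'.+1 then (upper_bidiag d th ph - (th (d - s')%N)%:M) *m PU th ph s' else 1%:M.

Lemma PL_A th s (i k : 'I_d.+1) : (i < s)%N -> PL th s i k = 0.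
Proof.
elim: s i k => [//|s IH] i k Hi /=; rewrite mulL.
case: (ltnP i s) => Hs.
  rewrite IH // mulr0 add0r; case: ifP => // ?; apply: IH; rewrite inordK; ordlia.
have -> : (i : nat) = s by ordlia.
rewrite subrr mul0r add0r; case: ifP => // ?; apply: IH; rewrite inordK; ordlia.
Qed.

Lemma PL_B th s (i k : 'I_d.+1) : (i < k)%N -> PL th s i k = 0.
Proof.
elim: s i k => [|s IH] i k Hi /=.
  by rewrite mxE; case: eqP => // E; move: Hi; rewrite E ltnn.
rewrite mulL IH // mulr0 add0r; case: ifP => // ?; apply: IH; rewrite inordK; ordlia.
Qed.

Lemma PL_C th s (k : 'I_d.+1) : PL th s k k = \prod_(j < s) (th k - th j).
Proof.
elim: s => [|s IH] /=; first by rewrite big_ord0 mxE eqxx.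
rewrite mulL IH big_ord_recr /= mulrC; case: ifP => H; last by rewrite addr0.
by rewrite PL_B ?addr0 // inordK; ordlia.
Qed.

Lemma PL_D th s (i k : 'I_d.+1) : (k + s < i)%N -> PL th s i k = 0.
Proof.
elim: s i k => [|s IH] i k Hi /=.
  by rewrite mxE; case: eqP => // E; move: Hi; rewrite E addn0 ltnn.
rewrite mulL IH; last ordlia. rewrite mulr0 add0r; case: ifP => // ?; apply: IH; rewrite inordK; ordlia.
Qed.

Lemma PL_E th s (i k : 'I_d.+1) : (i : nat) = (k + s)%N -> PL th s i k = 1.
Proof.
elim: s i k => [|s IH] i k Hi /=.
  by rewrite mxE addn0 in Hi *; rewrite (val_inj Hi) eqxx.
rewrite mulL PL_D; last ordlia. rewrite mulr0 add0r ifT; last ordlia.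
apply: IH; rewrite inordK; ordlia.
Qed.

Lemma PU_A th ph s (i k : 'I_d.+1) : (d < i + s)%N -> PU th ph s i k = 0.
Proof.
elim: s i k => [|s IH] i k Hi /=.
  by have := ltn_ord i; rewrite addn0 in Hi; ordlia.
rewrite mulU.
case: (ltnP d (i + s)) => Hs.
  rewrite IH // mulr0 add0r; case: ifP => // H; rewrite IH ?mulr0 // inordK; ordlia.
have -> : (d - s)%N = i by ordlia.
rewrite subrr mul0r add0r; case: ifP => // H; rewrite IH ?mulr0 // inordK; ordlia.
Qed.

Lemma PU_B th ph s (i k : 'I_d.+1) : (k < i)%N -> PU th ph s i k = 0.
Proof.
elim: s i k => [|s IH] i k Hi /=.
  by rewrite mxE; case: eqP => // E; move: Hi; rewrite E ltnn.
rewrite mulU IH // mulr0 add0r; case: ifP => // ?; rewrite IH ?mulr0 // inordK; ordlia.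
Qed.

Lemma PU_C th ph s : PU th ph s ord0 ord0 = \prod_(j < s) (th 0%N - th (d - j)%N).
Proof.
elim: s => [|s IH] /=; first by rewrite big_ord0 mxE eqxx.
rewrite mulU IH big_ord_recr /= mulrC; case: ifP => H; last by rewrite addr0.
by rewrite PU_B ?mulr0 ?addr0 // inordK.
Qed.

Lemma PU_D th ph s (i k : 'I_d.+1) : (i + s < k)%N -> PU th ph s i k = 0.
Proof.
elim: s i k => [|s IH] i k Hi /=.
  by rewrite mxE; case: eqP => // E; move: Hi; rewrite E addn0 ltnn.
rewrite mulU IH; last ordlia. rewrite mulr0 add0r; case: ifP => // ?; rewrite IH ?mulr0 // inordK; ordlia.
Qed.

Lemma PU_E th ph s (i k : 'I_d.+1) : (k : nat) = (i + s)%N ->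
  PU th ph s i k = \prod_(j < s) ph (i + j.+1)%N.
Proof.
elim: s i k => [|s IH] i k Hi /=.
  by rewrite mxE addn0 in Hi *; rewrite (val_inj Hi) eqxx big_ord0.
rewrite mulU PU_D; last ordlia. rewrite mulr0 add0r ifT; last by have := ltn_ord k; ordlia.
rewrite IH; last by rewrite inordK; ordlia.
rewrite big_ord_recl /= inordK; last by have := ltn_ord k; ordlia.
rewrite addn1; congr (_ * _); apply: eq_bigr => j _; congr ph; rewrite /bump /=; ordlia.
Qed.


Lemma alg_mx (x : K) : (x%:A : 'M[K]_d.+1) = x%:M.
Proof. by rewrite -scalemx1. Qed.

Lemma eval_prod (I : Type) (X : 'M[K]_d.+1) (v : 'rV[K]_d.+1) lam (th c : I -> K) (r : seq I) (P : pred I) :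
  v *m X = lam *: v ->
  v *m \prod_(k <- r | P k) (c k *: (X - (th k)%:A)) = (\prod_(k <- r | P k) (c k * (lam - th k))) *: v.
Proof.
move=> Hv; elim/big_rec2: _ => [|k y M Pk IH]; first by rewrite scale1r; exact: mulmx1.
rewrite -mulmxE mulmxA -scalemxAr alg_mx mulmxBr Hv mul_mx_scalar -scalerBl -!scalemxAl IH !scalerA.
done.
Qed.

Lemma tr_lagr (X : 'M[K]_d.+1) th :
  (forall i, (i <= d)%N -> eigenvalue X (th i)) ->
  (forall i j, (i <= d)%N -> (j <= d)%N -> th i = th j -> i = j) ->
  \tr (\prod_(j < d.+1 | (j:nat) != 0%N) ((th 0%N - th j)^-1 *: (X - (th j)%:A))) = 1.
Proof.
move=> eig dist.
have H : forall i : 'I_d.+1, exists2 w : 'rV[K]_d.+1, w *m X = th i *: w & w != 0.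
  by move=> i; apply/eigenvalueP/eig; rewrite -ltnS.
have [v Hv1 Hv2] := fin_all_exists2 H.
pose Pj := fun j : 'I_d.+1 => \prod_(k < d.+1 | (k:nat) != j) ((th j - th k)^-1 *: (X - (th k)%:A)).
have HP : forall i j : 'I_d.+1, v i *m Pj j = (if i == j then 1 else 0) *: v i.
  move=> i j; rewrite /Pj (eval_prod _ _ _ _ (Hv1 i)); congr (_ *: _).
  case: eqP => [<-|/eqP ne].
    apply: big1 => k Hk; rewrite mulVf // subr_eq0; apply/eqP => E.
    by move/eqP: Hk; apply; apply: dist => //; rewrite -ltnS.
  rewrite (bigD1 i) /=; last by apply/eqP => /val_inj E; move/eqP: ne.
  by rewrite subrr mulr0 mul0r.
pose V := \matrix_(i < d.+1) v i.
have Vu : V \in unitmx.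
  rewrite -row_free_unit; apply: inj_row_free => u Hu.
  apply/rowP => j; rewrite mxE.
  have : u *m V *m Pj j = 0 by rewrite Hu mul0mx.
  rewrite [u *m V]mulmx_sum_row mulmx_suml (bigD1 j) //= big1 => [|i Hi]; last first.
    by rewrite -scalemxAl rowK HP (negbTE Hi) scale0r scaler0.
  rewrite addr0 -scalemxAl rowK HP eqxx scale1r => /eqP; rewrite scaler_eq0.
  by case/orP => [/eqP //|]; rewrite (negbTE (Hv2 j)).
have HD : V *m Pj ord0 = delta_mx ord0 ord0 *m V.
  apply/matrixP => i k.
  have E : row i (V *m Pj ord0) = (if i == ord0 then 1 else 0) *: row i V by rewrite row_mul rowK HP.
  have := congr1 (fun M : 'rV_ _ => M 0 k) E; rewrite !mxE => ->.
  rewrite (bigD1 ord0) //= big1 => [|l Hl]; last by rewrite !mxE (negbTE Hl) andbF mul0r.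
  by rewrite /V !mxE eqxx andbT addr0; case: eqP => [->|_]; rewrite ?mul1r ?mul0r.
change (\tr (Pj ord0) = 1).
rewrite -(mulKmx Vu (Pj ord0)) HD mxtrace_mulC -mulmxA mulmxV // mulmx1.
rewrite /mxtrace (bigD1 ord0) //= big1 => [|i Hi]; first by rewrite !mxE eqxx addr0.
by rewrite mxE (negbTE Hi).
Qed.

Lemma rowonly3 (X Y : 'M[K]_d.+1) :
  (forall i k, i != ord_max -> X i k = 0) -> (forall i k, i != ord0 -> Y i k = 0) ->
  X *m Y *m X = (X ord_max ord0 * Y ord0 ord_max) *: X.
Proof.
move=> HX HY; apply/matrixP => i j.
rewrite mxE (bigD1 ord_max) //= big1 => [|k Hk]; last by rewrite (HX k j Hk) mulr0.
rewrite mxE (bigD1 ord0) //= big1 => [|k Hk]; last by rewrite (HY k _ Hk) mulr0.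
rewrite !addr0 mxE; case: (eqVneq i ord_max) => [->|Hi]; first by [].
by rewrite (HX i ord0 Hi) (HX i j Hi) !mul0r mulr0.
Qed.

Lemma rowonly_idem (X : 'M[K]_d.+1) :
  (forall i k, i != ord_max -> X i k = 0) -> X ord_max ord_max = 1 -> X *m X = X.
Proof.
move=> HX H1; apply/matrixP => i j.
rewrite mxE (bigD1 ord_max) //= big1 => [|k Hk]; last by rewrite (HX k j Hk) mulr0.
rewrite addr0; case: (eqVneq i ord_max) => [->|Hi]; first by rewrite H1 mul1r.
by rewrite !(HX i) // mul0r.
Qed.

Lemma prod_ord_nz (B : nzRingType) (F : nat -> B) :
  \prod_(j < d.+1 | (j:nat) != 0%N) F j = \prod_(1 <= j < d.+1) F j.
Proof.
rewrite big_mkcond big_ord_recl /= mul1r big_add1 /= big_mkord.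
by apply: eq_bigr => i _.
Qed.

Lemma prod_rev (B : comNzRingType) (F : nat -> B) :
  \prod_(j < d.+1 | (j:nat) != 0%N) F j = \prod_(h < d) F (d - h)%N.
Proof.
rewrite prod_ord_nz big_add1 /= -{1}(add0n d) big_nat_rev /= big_mkord.
apply: eq_bigr => [[h Hh]] _ /=; congr F; rewrite ?add0n in Hh *; lia.
Qed.

Lemma prod_PL th s : (s <= d)%N ->
  \prod_(d.+1 - s <= j < d.+1) (lower_bidiag d (fun i => th (d - i)%N) - (th j)%:M) =
  PL (fun i => th (d - i)%N) s.
Proof.
elim: s => [|s IH] Hs /=; first by rewrite subn0 big_geq.
rewrite big_ltn; last lia.
have -> : (d.+1 - s.+1).+1 = (d.+1 - s)%N by lia.
rewrite IH; last lia.
by rewrite subSS mulmxE.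
Qed.

Lemma prod_PU th ph s : (s <= d)%N ->
  \prod_(d.+1 - s <= j < d.+1) (upper_bidiag d th ph - (th j)%:M) = PU th ph s.
Proof.
elim: s => [|s IH] Hs /=; first by rewrite subn0 big_geq.
rewrite big_ltn; last lia.
have -> : (d.+1 - s.+1).+1 = (d.+1 - s)%N by lia.
rewrite IH; last lia.
by rewrite subSS mulmxE.
Qed.
End M.

Lemma prod_scale (K : fieldType) (B : algType K) (I : Type) (r : seq I) (P : pred I)
   (c : I -> K) (x : I -> B) :
  \prod_(i <- r | P i) (c i *: x i) = (\prod_(i <- r | P i) c i) *: \prod_(i <- r | P i) x i.
Proof.
apply: (big_rec3 (fun a b e => a = b *: e)); first by rewrite scale1r.
by move=> i y1 y2 y3 _ ->; rewrite -scalerAl -scalerAr scalerA.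
Qed.

Lemma map_fac (K : fieldType) (A : algType K) n (g : {lrmorphism A -> 'M[K]_n.+1}) (c x : K) (y : A) :
  g (c *: (y - x%:A)) = c *: (g y - x%:M).
Proof. rewrite linearZ rmorphB; congr (_ *: (_ - _)). by have := rmorph_alg g x; move=> /= ->; rewrite -scalemx1. Qed.

Lemma map_fac' (K : fieldType) (A : algType K) n (g : {lrmorphism A -> 'M[K]_n.+1}) (c x : K) (y : A) :
  g (c *: (y - x%:A)) = c *: (g y - x%:A).
Proof. by rewrite map_fac -scalemx1. Qed.

Unset Implicit Arguments.
Set Strict Implicit.

Theorem theorem17p9 (K : fieldType) (d : nat) (A : algType K)
    (f : {lrmorphism A -> 'M[K]_d.+1}) (f_bij : bijective f)
    (a as_ : A) (theta thetas phi : nat -> K) :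
  leonard_system f a as_ theta thetas ->
  split_sequence d a as_ (fun i => theta (d - i)%N) thetas phi ->
  (trA f (prim_idem d a theta 0 * prim_idem d as_ thetas 0))^-1 =
    eta d theta d (theta 0%N) * eta d thetas d (thetas 0%N)
      / \prod_(1 <= j < d.+1) phi j.
Proof.
move=> [[eigA distA] [_ distS] _ _ _] [phnz [g [gbij [ga gas]]]].
set E := prim_idem d a theta 0.
set Es := prim_idem d as_ thetas 0.
pose c := \prod_(j < d.+1 | (j:nat) != 0%N) (theta 0%N - theta j)^-1.
pose cs := \prod_(j < d.+1 | (j:nat) != 0%N) (thetas 0%N - thetas j)^-1.
pose Q := PL d (fun i => theta (d - i)%N) d.
pose R := PU d thetas phi d.
have gE : g E = c *: Q.
  rewrite /E /prim_idem rmorph_prod.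
  rewrite (eq_bigr _ (fun j _ => map_fac _ _ _ _)) ga.
  rewrite prod_scale (@prod_ord_nz d _ (fun j => lower_bidiag d (fun i => theta (d - i)%N) - (theta j)%:M)).
  by rewrite -{1}(subSnn d) prod_PL.
have gEs : g Es = cs *: R.
  rewrite /Es /prim_idem rmorph_prod.
  rewrite (eq_bigr _ (fun j _ => map_fac _ _ _ _)) gas.
  rewrite prod_scale (@prod_ord_nz d _ (fun j => upper_bidiag d thetas phi - (thetas j)%:M)).
  by rewrite -{1}(subSnn d) prod_PU.
have QA : forall i k : 'I_d.+1, i != ord_max -> Q i k = 0.
  move=> i k Hi; apply: PL_A.
  have Hi' : (i : nat) != d by apply/eqP => H; case/eqP: Hi; apply/val_inj.
  by move: Hi' (ltn_ord i); lia.
have Qd0 : Q ord_max ord0 = 1 by apply: PL_E; rewrite /= add0n.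
have Qdd : Q ord_max ord_max = eta d theta d (theta 0%N).
  by rewrite /Q PL_C /eta /= subnn.
have RA : forall i k : 'I_d.+1, i != ord0 -> R i k = 0.
  move=> i k Hi; apply: PU_A.
  have Hi' : (i : nat) != 0%N by apply/eqP => H; case/eqP: Hi; apply/val_inj.
  by move: Hi'; lia.
have R00 : R ord0 ord0 = eta d thetas d (thetas 0%N) by rewrite /R PU_C.
have R0d : R ord0 ord_max = \prod_(1 <= j < d.+1) phi j.
  by rewrite /R PU_E /= ?add0n // big_add1 /= big_mkord.
have etaA : eta d theta d (theta 0%N) != 0.
  rewrite /eta; apply/prodf_neq0 => h _; rewrite subr_eq0; apply/eqP => H.
  by have := distA _ _ (leq0n _) (leq_subr _ _) H; move: (ltn_ord h); lia.
have etaS : eta d thetas d (thetas 0%N) != 0.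
  rewrite /eta; apply/prodf_neq0 => h _; rewrite subr_eq0; apply/eqP => H.
  by have := distS _ _ (leq0n _) (leq_subr _ _) H; move: (ltn_ord h); lia.
have Pnz : \prod_(1 <= j < d.+1) phi j != 0.
  rewrite prodf_seq_neq0; apply/allP => j; rewrite mem_index_iota => Hj.
  by apply/implyP => _; apply: phnz.
have cE : c = (eta d theta d (theta 0%N))^-1 by rewrite /c prodfV (@prod_rev d _ (fun j => theta 0%N - theta j)).
have csE : cs = (eta d thetas d (thetas 0%N))^-1 by rewrite /cs prodfV (@prod_rev d _ (fun j => thetas 0%N - thetas j)).
have ginj : injective g := bij_inj gbij.
have HX : forall i k, i != ord_max -> (g E) i k = 0 by move=> i k Hi; rewrite gE mxE QA // mulr0.
have HY : forall i k, i != ord0 -> (g Es) i k = 0 by move=> i k Hi; rewrite gEs mxE RA // mulr0.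
pose t := (g E) ord_max ord0 * (g Es) ord0 ord_max.
have gM : forall x y, g (x * y) = g x *m g y by move=> x y; exact: rmorphM.
have gZ : forall k x, g (k *: x) = k *: g x by move=> k x; exact: linearZ.
have fM : forall x y, f (x * y) = f x *m f y by move=> x y; exact: rmorphM.
have fZ : forall k x, f (k *: x) = k *: f x by move=> k x; exact: linearZ.
have EEE : E * Es * E = t *: E.
  by apply: ginj; rewrite gZ !gM rowonly3.
have Gdd : (g E) ord_max ord_max = 1 by rewrite gE mxE Qdd cE mulVf.
have EE : E * E = E.
  by apply: ginj; rewrite gM rowonly_idem.
have trE : \tr (f E) = 1.
  rewrite /E /prim_idem rmorph_prod (eq_bigr _ (fun j _ => map_fac' _ _ _ _)).
  exact: tr_lagr.
have trt : \tr (f (E * Es)) = t.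
  rewrite -[E in E * Es]EE !fM -mulmxA mxtrace_mulC -fM -fM.
  by rewrite EEE fZ mxtraceZ trE mulr1.
rewrite /trA trt /t gE gEs !mxE Qd0 R0d cE csE.
field.
by rewrite Pnz etaA etaS.
Qed.
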